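(* Assume the Axiom of Choice. Let $A$ be a $\boldsymbol{\mathit{ba}\ell}$-algebra, $X$ the set of proper archimedean $\ell$-ideals of $A$ ordered by inclusion with the Alexandroff topology, and $Y_A\subseteq X$ the set of maximal $\ell$-ideals of $A$. Then the restriction map $\psi:N(X)\to B(Y_A)$, $\psi(f)=f|_{Y_A}$, is a $\boldsymbol{\mathit{ba}\ell}$-isomorphism.
   Context: A $\boldsymbol{\mathit{ba}\ell}$-algebra is a commutative unital lattice-ordered algebra $A$ over $\mathbb R$ that is bounded (for every $a\in A$ there is an integer $n\ge1$ with $a\le n\cdot1$) and archimedean (if $na\le b$ for all $n\ge1$ then $a\le0$). An $\ell$-ideal is a ring ideal $I$ with $|a|\le|b|$, $b\in I\Rightarrow a\in I$; it is archimedean if $A/I$ is archimedean; every maximal $\ell$-ideal is archimedean. The Alexandroff topology on a poset has the upsets as open sets. For a space $X$, $B(X)$ is the $\boldsymbol{\mathit{ba}\ell}$-algebra of bounded real functions with pointwise operations, $f_*(x)=\sup\{\inf f[U]\mid U\text{ open}\ni x\}$, $f^*(x)=\inf\{\sup f[U]\mid U\text{ open}\ni x\}$, $f^\#=(f^* )_*$, and $N(X)=\{f\in B(X)\mid f=f^\#\}$, a Dedekind complete $\boldsymbol{\mathit{ba}\ell}$-algebra whose operations are the normalizations $(\cdot)^\#$ of pointwise operations. *)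

(* Defs.v *)
(* The reals are an arbitrary
   [R : realType] (every realType is a model of the complete archimedean
   ordered field R).  Classical axioms (choice) are available via boolp. *)
From HB Require Import structures.
From mathcomp Require Import all_boot all_order all_algebra.
From mathcomp Require Import all_classical all_reals.
Set Implicit Arguments. Unset Strict Implicit. Unset Printing Implicit Defensive.
Import Order.TTheory GRing.Theory Num.Theory.
Local Open Scope classical_set_scope.
Local Open Scope ring_scope.

Section BalAlgebra.
Variables (R : realType) (A : comAlgType R).
Variables (le : A -> A -> Prop) (join meet : A -> A -> A).

(* (A, le, join, meet) is a bounded archimedean commutative unital
   lattice-ordered R-algebra: [join]/[meet] are the binary sup/inf of the
   partial order [le]. *)
Record is_bal : Prop := {
  bal_refl : forall a, le a a;
  bal_trans : forall a b c, le a b -> le b c -> le a c;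
  bal_anti : forall a b, le a b -> le b a -> a = b;
  bal_join_l : forall a b, le a (join a b);
  bal_join_r : forall a b, le b (join a b);
  bal_join_lub : forall a b c, le a c -> le b c -> le (join a b) c;
  bal_meet_l : forall a b, le (meet a b) a;
  bal_meet_r : forall a b, le (meet a b) b;
  bal_meet_glb : forall a b c, le c a -> le c b -> le c (meet a b);
  bal_add : forall a b c, le a b -> le (a + c) (b + c);
  bal_scale : forall (r : R) a b, 0 <= r -> le a b -> le (r *: a) (r *: b);
  bal_mul : forall a b, le 0 a -> le 0 b -> le 0 (a * b);
  bal_bounded : forall a, exists n : nat, (1 <= n)%N /\ le a (1 *+ n);
  bal_archi : forall a b, (forall n : nat, (1 <= n)%N -> le (a *+ n) b) -> le a 0
}.

Definition labs (a : A) : A := join a (- a).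
Definition lpos (a : A) : A := join a 0.

Definition lideal (I : set A) : Prop :=
  [/\ I 0,
      (forall a b, I a -> I b -> I (a - b)),
      (forall a c, I a -> I (c * a)) &
      (forall a b, le (labs a) (labs b) -> I b -> I a)].

Definition proper (I : set A) : Prop := I <> setT.

(* The order of the quotient l-algebra A/I (I an l-ideal):
   a + I <= b + I  iff  (a - b)^+ belongs to I. *)
Definition quot_le (I : set A) (a b : A) : Prop := I (lpos (a - b)).

Definition archimedean_lideal (I : set A) : Prop :=
  lideal I /\
  forall a b, (forall n : nat, (1 <= n)%N -> quot_le I (a *+ n) b) -> quot_le I a 0.

Definition maximal_lideal (I : set A) : Prop :=
  [/\ lideal I, proper I &
      forall J, lideal J -> proper J -> I `<=` J -> J = I].

Definition Xsp := {I : set A | archimedean_lideal I /\ proper I}.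

Definition alex_open (U : set Xsp) : Prop :=
  forall x y : Xsp, U x -> proj1_sig x `<=` proj1_sig y -> U y.

Definition Ysp := {x : Xsp | maximal_lideal (proj1_sig x)}.

End BalAlgebra.

Section Normal.
Variables (R : realType) (T : Type) (isopen : set T -> Prop).

Definition bounded_fun (f : T -> R) : Prop := exists M : R, forall x, `|f x| <= M.

Definition lower_env (f : T -> R) (x : T) : R :=
  sup [set inf (f @` U) | U in [set U | isopen U /\ U x]].

Definition upper_env (f : T -> R) (x : T) : R :=
  inf [set sup (f @` U) | U in [set U | isopen U /\ U x]].

Definition normalize (f : T -> R) : T -> R := lower_env (upper_env f).

Definition normal_fun (f : T -> R) : Prop := bounded_fun f /\ normalize f = f.

End Normal.

Definition restrict_psi (R : realType) (A : comAlgType R)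
  (le : A -> A -> Prop) (join meet : A -> A -> A)
  (f : Xsp le join -> R) : Ysp le join -> R :=
  fun y => f (proj1_sig y).

(* Main.v *)
Require Import Defs.
From HB Require Import structures.
From mathcomp Require Import all_boot all_order all_algebra.
From mathcomp Require Import all_classical all_reals.
Import Order.TTheory GRing.Theory Num.Theory.
Local Open Scope classical_set_scope.
Local Open Scope ring_scope.

From mathcomp Require Import ring.
Section Top.
Variables (R : realType) (T : Type) (sub : T -> T -> Prop).
Hypothesis sub_refl : forall x, sub x x.
Hypothesis sub_trans : forall x y z, sub x y -> sub y z -> sub x z.
Variable Y : T -> Prop.
Hypothesis HY1 : forall m z, Y m -> sub m z -> z = m.
Hypothesis HY2 : forall x, exists m, Y m /\ sub x m.

Definition isopen (U : set T) : Prop := forall x y, U x -> sub x y -> U y.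
Definition Ysig := {x : T | Y x}.
Definition Gext (h : Ysig -> R) (x : T) : R :=
  inf [set h m | m in [set m : Ysig | sub x (sval m)]].
Definition psi (f : T -> R) : Ysig -> R := fun m => f (sval m).

Lemma G_Y h m : Gext h (sval m) = h m.
Proof.
rewrite /Gext.
have -> : [set h m' | m' in [set m' : Ysig | sub (sval m) (sval m')]] = [set h m].
  apply/seteqP; split => [_ [m' hm' <-]|_ ->].
  - have e := HY1 _ _ (proj2_sig m) hm'.
    by case: m m' e hm' => [a pa] [b pb] /= e; subst b; rewrite (Prop_irrelevance pa pb).
  - by exists m => //=.
exact: inf1.
Qed.

Lemma G_bounded h : bounded_fun h -> bounded_fun (Gext h).
Proof.
move=> [M hM]; exists M => x; rewrite ler_norml.
have hb y : - M <= h y <= M by rewrite -ler_norml.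
have [m [Ym xm]] := HY2 x.
have ne : [set h m' | m' in [set m' : Ysig | sub x (sval m')]] !=set0.
  by exists (h (exist _ m Ym)); exists (exist _ m Ym).
apply/andP; split.
- apply: lb_le_inf => // _ [y _ <-]; by case/andP: (hb y).
- apply: (le_trans (y := h (exist _ m Ym))); last by case/andP: (hb (exist _ m Ym)).
  apply: ge_inf; last by exists (exist _ m Ym).
  by exists (- M) => _ [y _ <-]; case/andP: (hb y).
Qed.

Lemma normG f : bounded_fun f -> normalize isopen f = Gext (psi f).
Proof.
move=> [M hM]; have fb x : - M <= f x <= M by rewrite -ler_norml.
apply/funext => x; rewrite /normalize /lower_env.
set g := upper_env isopen f.
have up_open z : isopen [set y | sub z y] by move=> a b ha hb; apply: sub_trans ha hb.
have T_open : isopen setT by [].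
have hsupU U z : U z -> has_ubound (f @` U).
  by move=> _; exists M => _ [y _ <-]; case/andP: (fb y).
have supU_ge U z : U z -> f z <= sup (f @` U).
  by move=> Uz; apply: (ub_le_sup (hsupU _ _ Uz)); exists z.
have supU_le U z : U z -> sup (f @` U) <= M.
  move=> Uz; apply: ge_sup; first by exists (f z); exists z.
  by move=> _ [y _ <-]; case/andP: (fb y).
have g_ge y z : sub y z -> f z <= g y.
  move=> yz; rewrite /g /upper_env; apply: lb_le_inf.
    by exists (sup (f @` setT)); exists setT.
  by move=> _ [U [oU Uy] <-]; apply: supU_ge (oU _ _ Uy yz).
have g_le y : g y <= M.
  have lbS : has_lbound [set sup (f @` U) | U in [set U | isopen U /\ U y]].
    by exists (f y) => _ [U [oU Uy] <-]; exact: supU_ge Uy.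
  apply: le_trans (supU_le setT y I); apply: (ge_inf lbS); by exists setT.
have gb y : - M <= g y <= M.
  apply/andP; split; last exact: g_le.
  by apply: le_trans (g_ge y y (sub_refl y)); case/andP: (fb y).
have g_max m : Y m -> g m <= f m.
  move=> Ym.
  have lbS : has_lbound [set sup (f @` U) | U in [set U | isopen U /\ U m]].
    by exists (f m) => _ [U [oU Um] <-]; exact: supU_ge Um.
  apply: (le_trans (y := sup (f @` [set y | sub m y]))).
    by apply: (ge_inf lbS); exists [set y | sub m y] => //; split => //; apply: sub_refl.
  apply: ge_sup; first by exists (f m); exists m => //; apply: sub_refl.
  by move=> _ [z mz <-]; rewrite (HY1 _ _ Ym mz).
have infU_le U z : U z -> inf (g @` U) <= g z.
  move=> Uz; apply: ge_inf; last by exists z.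
  by exists (- M) => _ [y _ <-]; case/andP: (gb y).
have lbE : has_lbound [set psi f m | m in [set m : Ysig | sub x (sval m)]].
  by exists (- M) => _ [y _ <-]; case/andP: (fb (sval y)).
have neE : [set psi f m | m in [set m : Ysig | sub x (sval m)]] !=set0.
  have [m [Ym xm]] := HY2 x.
  by exists (psi f (exist _ m Ym)); exists (exist _ m Ym).
apply: le_anti; apply/andP; split.
- apply: ge_sup; first by exists (inf (g @` setT)); exists setT.
  move=> _ [U [oU Ux] <-]; apply: lb_le_inf => //.
  move=> _ [m hm <-]; rewrite /psi.
  apply: le_trans (infU_le U (sval m) (oU _ _ Ux hm)) _.
  exact: g_max (proj2_sig m).
- apply: (le_trans (y := inf (g @` [set y | sub x y]))).
    apply: lb_le_inf; first by exists (g x); exists x => //; apply: sub_refl.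
    move=> _ [z xz <-]; have [m [Ym zm]] := HY2 z.
    apply: (le_trans (y := psi f (exist _ m Ym))); last exact: g_ge zm.
    by apply: (ge_inf lbE); exists (exist _ m Ym) => //=; apply: sub_trans zm.
  apply: ub_le_sup.
    exists M => _ [U [oU Ux] <-].
    by apply: le_trans (infU_le U x Ux) _; case/andP: (gb x).
  by exists [set y | sub x y] => //; split => //; apply: sub_refl.
Qed.
End Top.

Set Implicit Arguments.
Section Alg.
Variables (R : realType) (A : comAlgType R).
Variables (le : A -> A -> Prop) (join meet : A -> A -> A).
Hypothesis H : is_bal le join meet.

Let leT := (bal_trans H).
Lemma lR a : le a a. Proof. exact: (bal_refl H). Qed.
Lemma lA a b c : le a b -> le (a + c) (b + c). Proof. by move=> h; apply: (bal_add H). Qed.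
Lemma lAn a b : le a b -> le b a -> a = b. Proof. exact: (bal_anti H). Qed.
Lemma lJl a b : le a (join a b). Proof. exact: (bal_join_l H). Qed.
Lemma lJr a b : le b (join a b). Proof. exact: (bal_join_r H). Qed.
Lemma lJ a b c : le a c -> le b c -> le (join a b) c. Proof. exact: (bal_join_lub H). Qed.
Lemma lM a b : le 0 a -> le 0 b -> le 0 (a * b). Proof. exact: (bal_mul H). Qed.
Lemma lS (r : R) a b : 0 <= r -> le a b -> le (r *: a) (r *: b). Proof. exact: (bal_scale H). Qed.
Lemma lB a : exists n : nat, (1 <= n)%N /\ le a (1 *+ n). Proof. exact: (bal_bounded H). Qed.

Lemma le_add2 a b c d : le a b -> le c d -> le (a + c) (b + d).
Proof.
move=> h1 h2; apply: (leT (lA c h1)).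
by rewrite ![b + _]addrC; apply: lA.
Qed.

Lemma le_addr a b c : le (a + c) (b + c) -> le a b.
Proof. by move=> h; have := lA (- c) h; rewrite !addrK. Qed.

Lemma le_muln a b n : le a b -> le (a *+ n) (b *+ n).
Proof.
move=> h; elim: n => [|n IH]; first by rewrite !mulr0n; apply: lR.
by rewrite !mulrS; apply: le_add2.
Qed.

Lemma scale_natK n (a : A) : (n.+1%:R : R)^-1 *: (a *+ n.+1) = a.
Proof.
by rewrite -scaler_nat scalerA mulVf ?scale1r // pnatr_eq0.
Qed.

Lemma le_mulnK a b n : le (a *+ n.+1) (b *+ n.+1) -> le a b.
Proof.
move=> h; have := @lS (n.+1%:R : R)^-1 _ _ _ h.
by rewrite !scale_natK; apply; rewrite invr_ge0.
Qed.

Lemma le01 : le 0 1.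
Proof.
have [n [n1 h]] := lB 0.
case: n n1 h => // n _ h; apply: (@le_mulnK _ _ n).
by rewrite mul0rn.
Qed.

Lemma le0n n : le 0 (1 *+ n).
Proof. by have := le_muln n le01; rewrite mul0rn. Qed.

Lemma le_sub0 a b : le a b -> le 0 (b - a).
Proof. by move=> h; have := lA (- a) h; rewrite subrr. Qed.

Lemma le_sub0' a b : le 0 (b - a) -> le a b.
Proof. by move=> h; have := lA a h; rewrite add0r subrK. Qed.

Lemma le0_add a b : le 0 a -> le 0 b -> le 0 (a + b).
Proof. by move=> h1 h2; have := le_add2 h1 h2; rewrite addr0. Qed.

Lemma labs_ge a : le a (labs join a).
Proof. exact: lJl. Qed.
Lemma labs_geN a : le (- a) (labs join a).
Proof. exact: lJr. Qed.
Lemma labs_lub a c : le a c -> le (- a) c -> le (labs join a) c.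
Proof. exact: lJ. Qed.

Lemma labs_ge0 a : le 0 (labs join a).
Proof.
apply: (@le_mulnK _ _ 1); rewrite mul0rn mulr2n.
by have := le_add2 (labs_ge a) (labs_geN a); rewrite subrr.
Qed.

Lemma labs_pos a : le 0 a -> labs join a = a.
Proof.
move=> h; apply: (lAn); last exact: labs_ge.
apply: labs_lub; first exact: lR.
apply: (leT _ h); have := lA (- a) h; by rewrite add0r subrr.
Qed.

Lemma labs_labs a : labs join (labs join a) = labs join a.
Proof. exact/labs_pos/labs_ge0. Qed.

Lemma labs_sub a b : le (labs join (a - b)) (labs join a + labs join b).
Proof.
apply: labs_lub; first exact: le_add2 (labs_ge a) (labs_geN b).
by rewrite opprB addrC; apply: le_add2 (labs_geN a) (labs_ge b).
Qed.

Lemma labs_mul_le c a K : le (labs join c) (1 *+ K) ->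
  le (labs join (c * a)) (labs join a *+ K).
Proof.
move=> hc; set u := labs join a.
have P1 : le 0 (1 *+ K - c) by apply/le_sub0/(leT (labs_ge c)).
have P2 : le 0 (1 *+ K + c).
  by rewrite -(opprK c); apply/le_sub0/(leT (labs_geN c)).
have Q1 : le 0 (u - a) by apply/le_sub0/labs_ge.
have Q2 : le 0 (u + a) by rewrite -(opprK a); apply/le_sub0/labs_geN.
apply: labs_lub; apply: le_sub0'; apply: (@le_mulnK _ _ 1); rewrite mul0rn.
- have := le0_add (lM P1 Q2) (lM P2 Q1).
  by have -> : (1 *+ K - c) * (u + a) + (1 *+ K + c) * (u - a)
      = (u *+ K - c * a) *+ 2 by ring.
- have := le0_add (lM P2 Q2) (lM P1 Q1).
  by have -> : (1 *+ K + c) * (u + a) + (1 *+ K - c) * (u - a)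
      = (u *+ K - - (c * a)) *+ 2 by ring.
Qed.

Section Ideal.
Variable I : set A.
Hypothesis HI : lideal le join I.

Lemma id0 : I 0. Proof. by case: HI. Qed.
Lemma idB a b : I a -> I b -> I (a - b). Proof. by case: HI => _ h _ _; apply: h. Qed.
Lemma idN a : I a -> I (- a). Proof. by move=> h; rewrite -sub0r; apply: idB => //; apply: id0. Qed.
Lemma idD a b : I a -> I b -> I (a + b).
Proof. by move=> h1 h2; rewrite -(opprK b); apply: idB => //; apply: idN. Qed.
Lemma idM a c : I a -> I (c * a). Proof. by case: HI => _ _ h _; apply: h. Qed.
Lemma idS a b : le (labs join a) (labs join b) -> I b -> I a.
Proof. by case: HI => _ _ _ h; apply: h. Qed.
Lemma idn a n : I a -> I (a *+ n). Proof. by move=> h; rewrite -mulr_natl; apply: idM. Qed.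
Lemma idabs a : I a -> I (labs join a).
Proof. by apply: idS; rewrite labs_labs; apply: lR. Qed.
Lemma idpos a b : le 0 a -> le a b -> I b -> I a.
Proof.
move=> h0 h; apply: idS; rewrite labs_pos //; apply: (leT h); apply: labs_ge.
Qed.
Lemma proper1 : Defs.proper I <-> ~ I 1.
Proof.
split=> [hp h1|h1 hT]; last by apply: h1; rewrite hT.
apply: hp; apply/seteqP; split => // c _; rewrite -(mulr1 c); exact: idM.
Qed.
End Ideal.

Lemma maximal_archimedean M : maximal_lideal le join M -> archimedean_lideal le join M.
Proof.
case=> HM pM maxM; split => // a b0 hn.
rewrite /quot_le /lpos.
set c := join (a - 0) 0.
have c0 : le 0 c by apply: lJr.
case: (pselect (M c)) => // Mc; exfalso.
pose J := fun x => exists m k, M m /\ le (labs join x) (m + c *+ k).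
have HJ : lideal le join J.
  split.
  - exists 0, 0%N; split; first exact: id0.
    by rewrite labs_pos ?addr0 ?mulr0n; apply: lR.
  - move=> x y [m1 [k1 [M1 h1]]] [m2 [k2 [M2 h2]]].
    exists (m1 + m2), (k1 + k2)%N; split; first exact: idD.
    apply: (leT (labs_sub x y)); rewrite mulrnDr addrACA; exact: le_add2.
  - move=> x e [m [k [M1 h1]]].
    have [K [_ hK]] := lB (labs join e).
    exists (m *+ K), (k * K)%N; split; first exact: idn.
    apply: (leT (@labs_mul_le e x K hK)); rewrite mulrnA -mulrnDl; exact: le_muln.
  - move=> x y hxy [m [k [M1 h1]]]; exists m, k; split => //; exact: leT h1.
have MJ : M `<=` J.
  move=> x Mx; exists (labs join x), 0%N; split; first exact: idabs.
  by rewrite mulr0n addr0; apply: lR.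
have Jc : J c.
  exists 0, 1%N; split; first exact: id0.
  by rewrite labs_pos // add0r; apply: lR.
have nJ : ~ Defs.proper J.
  by move=> pJ; apply: Mc; rewrite -(maxM J HJ pJ MJ).
have [m [k [Mm h1]]] : J 1.
  by case: (pselect (J 1)) => // nJ1; exfalso; apply: nJ; apply/proper1.
rewrite labs_pos in h1; last exact: le01.
have [N [N1 hN]] := lB b0.
pose n := (k.+1 * N.+1)%N.
have h2 : le 1 (m + c *+ k.+1).
  apply: (leT h1); rewrite mulrS (addrC c) addrA.
  by have := lA (m + c *+ k) c0; rewrite add0r addrC.
have h3 := le_muln N.+1 h2.
rewrite mulrnDl -mulrnA -/n in h3.
set p := join (a *+ n - b0) 0.
have Mp : M p by apply: hn; rewrite /n muln_gt0.
have h4 : le (c *+ n) (p + 1 *+ N).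
  have z0 : le 0 (p + 1 *+ N) by apply: le0_add; [apply: lJr | apply: le0n].
  set z := p + 1 *+ N in z0 *.
  have hxn : le ((a - 0) *+ n) z.
    rewrite subr0 -(subrK b0 (a *+ n)); apply: le_add2 => //; exact: lJl.
  rewrite /n; case E: (k.+1 * N.+1)%N => [|n'] //.
  pose w := (n'.+1%:R : R)^-1 *: z.
  have wK : w *+ n'.+1 = z by rewrite /w scalerMnl -mulr_natr mulVf ?scale1r // pnatr_eq0.
  have cw : le c w.
    apply: lJ; apply: (@le_mulnK _ _ n'); rewrite wK //; first by rewrite -E.
    by rewrite mul0rn.
  by apply: (leT (le_muln n'.+1 cw)); rewrite wK; apply: lR.
have h5 : le (1 *+ N.+1) (m *+ N.+1 + (p + 1 *+ N)).
  apply: (leT h3); rewrite ![m *+ _ + _]addrC; exact: lA.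
rewrite mulrS addrA in h5.
have h6 := @le_addr _ _ _ h5.
apply: ((proper1 HM).1 pM).
apply: (idpos HM le01 h6); apply: idD => //; exact: idn.
Qed.

Lemma exists_maximal (x : set A) : lideal le join x -> Defs.proper x ->
  exists M, maximal_lideal le join M /\ x `<=` M.
Proof.
move=> Hx px.
pose T := {I : set A | lideal le join I /\ Defs.proper I /\ x `<=` I}.
pose Rl := fun s t : T => `[< sval s `<=` sval t >].
have [||||t tmax] := @Zorn T Rl.
- by move=> s; apply/asboolP.
- by move=> r s t /asboolP h1 /asboolP h2; apply/asboolP; exact: subset_trans h1 h2.
- by move=> [s ps] [t pt] /asboolP h1 /asboolP h2; apply: eq_exist; apply/seteqP.
- move=> C Ctot.
  pose U := x `|` \bigcup_(s in C) sval s.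
  pose good := fun I : set A => [/\ lideal le join I, ~ I 1, I `<=` U & x `<=` I].
  have gx : good x.
    by split => //; [apply/(proper1 Hx) | move=> c xc; left].
  have gs : forall s, C s -> good (sval s).
    move=> [I [HI [pI xI]]] Cs; split => //=; first exact/(proper1 HI).
    by move=> c Ic; right; exists (exist _ I (conj HI (conj pI xI))).
  have cov1 : forall c, U c -> exists I, good I /\ I c.
    move=> c [xc|[s Cs sc]]; first by exists x.
    by exists (sval s); split => //; apply: gs.
  have cov : forall c1 c2, U c1 -> U c2 -> exists I, good I /\ I c1 /\ I c2.
    move=> c1 c2 [xc1|[s1 Cs1 sc1]] [xc2|[s2 Cs2 sc2]].
    + by exists x.
    + exists (sval s2); split; first exact: gs.
      by split => //; case: (gs _ Cs2) => _ _ _; apply.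
    + exists (sval s1); split; first exact: gs.
      by split => //; case: (gs _ Cs1) => _ _ _; apply.
    + case: (Ctot _ _ Cs1 Cs2) => /asboolP h.
      * by exists (sval s2); split; [exact: gs | split => //; apply: h].
      * by exists (sval s1); split; [exact: gs | split => //; apply: h].
  have HU : lideal le join U.
    split.
    - by left; apply: (id0 Hx).
    - move=> a b Ua Ub; have [I [[HI _ IU _] [Ia Ib]]] := cov _ _ Ua Ub.
      by apply: IU; apply: idB.
    - move=> a c Ua; have [I [[HI _ IU _] Ia]] := cov1 _ Ua.
      by apply: IU; apply: idM.
    - move=> a b hab Ub; have [I [[HI _ IU _] Ib]] := cov1 _ Ub.
      by apply: IU; apply: idS hab Ib.
  have pU : Defs.proper U.
    apply/(proper1 HU) => U1; have [I [[HI n1 _ _] I1]] := cov1 _ U1.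
    exact: n1.
  have xU : x `<=` U by move=> c xc; left.
  exists (exist _ U (conj HU (conj pU xU))) => s Cs; apply/asboolP => c sc.
  by right; exists s.
- case: t tmax => [I [HI [pI xI]]] tmax.
  exists I; split => //; split => // J HJ pJ IJ.
  have xJ : x `<=` J by apply: subset_trans IJ.
  have := tmax (exist _ J (conj HJ (conj pJ xJ))).
  by move=> /(_ (asboolT IJ)) [].
Qed.
End Alg.

Theorem mainTheorem13 (R : realType) (A : comAlgType R)
  (le : A -> A -> Prop) (join meet : A -> A -> A) :
  is_bal le join meet ->
  let N := normal_fun (@alex_open R A le join) in
  let nz := normalize (@alex_open R A le join) in
  let psi := @restrict_psi R A le join meet in
  (* psi maps N(X) into B(Y_A) *)
  (forall f, N f -> bounded_fun (psi f)) /\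
  (* injective on N(X) *)
  (forall f g, N f -> N g -> psi f = psi g -> f = g) /\
  (* onto B(Y_A) *)
  (forall h : Ysp le join -> R, bounded_fun h -> exists f, N f /\ psi f = h) /\
  (* ba-l-morphism: preserves +, *, scalars, 1, join, meet of N(X) *)
  (forall f g, N f -> N g -> psi (nz (f \+ g)) = psi f \+ psi g) /\
  (forall f g, N f -> N g -> psi (nz (f \* g)) = psi f \* psi g) /\
  (forall (r : R) f, N f -> psi (nz (fun x => r * f x)) = (fun y => r * psi f y)) /\
  psi (nz (fun=> 1)) = (fun=> 1) /\
  (forall f g, N f -> N g ->
     psi (nz (fun x => Order.max (f x) (g x))) = (fun y => Order.max (psi f y) (psi g y))) /\
  (forall f g, N f -> N g ->
     psi (nz (fun x => Order.min (f x) (g x))) = (fun y => Order.min (psi f y) (psi g y))).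
Proof.
move=> HB; cbv zeta.
pose sub := fun x y : Xsp le join => proj1_sig x `<=` proj1_sig y.
pose Y := fun x : Xsp le join => maximal_lideal le join (proj1_sig x).
have s_refl : forall x, sub x x by move=> x.
have s_trans : forall x y z, sub x y -> sub y z -> sub x z.
  by move=> x y z h1 h2; apply: subset_trans h1 h2.
have HY1 : forall m z, Y m -> sub m z -> z = m.
  move=> [m pm] [z pz] Ym mz.
  have e : z = m.
    case: Ym => _ _ maxm; exact: (maxm z (proj1 (proj1 pz)) (proj2 pz) mz).
  subst z; congr exist; exact: Prop_irrelevance.
have HY2 : forall x, exists m, Y m /\ sub x m.
  move=> x; have [[Hx _] px] := proj2_sig x.
  have [M [maxM xM]] := exists_maximal Hx px.
  have aM := maximal_archimedean HB maxM.
  have pM : Defs.proper M by case: maxM.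
  by exists (exist _ M (conj aM pM)).
have nG : forall f, bounded_fun f ->
    normalize (@alex_open R A le join) f = @Gext R _ sub Y (@psi R _ Y f).
  by move=> f bf; exact: (@normG R _ sub s_refl s_trans Y HY1 HY2 f bf).
have GY : forall h, @psi R _ Y (@Gext R _ sub Y h) = h.
  move=> h; apply/funext => m. exact: (@G_Y R _ sub s_refl Y HY1 h m).
have pn : forall f, bounded_fun f ->
    restrict_psi meet (normalize (@alex_open R A le join) f) = restrict_psi meet f.
  by move=> f bf; rewrite nG //; exact: (GY (@psi R _ Y f)).
split.
  by move=> f [[M hM] _]; exists M => y; apply: hM.
split.
  move=> f g [bf nf] [bg ng] e.
  by rewrite -nf -ng !nG //; congr Gext; exact: e.
split.
  move=> h bh; exists (@Gext R _ sub Y h); split; last exact: GY.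
  split; first exact: (@G_bounded R _ sub Y HY2 h bh).
  by rewrite nG ?GY //; exact: (@G_bounded R _ sub Y HY2 h bh).
have bnd2 : forall (f g : Xsp le join -> R) (op : R -> R -> R),
    bounded_fun f -> bounded_fun g ->
    (forall Mf Mg, exists M, forall a b, `|a| <= Mf -> `|b| <= Mg -> `|op a b| <= M) ->
    bounded_fun (fun x => op (f x) (g x)).
  move=> f g op [Mf hf] [Mg hg] hop; have [M hM] := hop Mf Mg.
  by exists M => x; apply: hM.
split.
  move=> f g [bf _] [bg _]; rewrite pn //; apply: bnd2 => // Mf Mg.
  exists (Mf + Mg) => a b ha hb; apply: le_trans (ler_normD _ _) _; exact: lerD.
split.
  move=> f g [bf _] [bg _]; rewrite pn //; apply: bnd2 => // Mf Mg.
  exists (Mf * Mg) => a b ha hb; rewrite normrM; exact: ler_pM.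
split.
  move=> r f [[M hM] _]; rewrite pn //; exists (`|r| * M) => x.
  by rewrite normrM; apply: ler_wpM2l.
split.
  by rewrite pn //; exists 1 => x; rewrite normr1.
split.
  move=> f g [bf _] [bg _]; rewrite pn //; apply: bnd2 => // Mf Mg.
  exists (Mf + Mg) => a b ha hb.
  have a0 : 0 <= Mf by apply: le_trans ha.
  have b0 : 0 <= Mg by apply: le_trans hb.
  rewrite /Order.max; case: ifP => _.
    by apply: le_trans hb _; rewrite lerDr.
  by apply: le_trans ha _; rewrite lerDl.
move=> f g [bf _] [bg _]; rewrite pn //; apply: bnd2 => // Mf Mg.
exists (Mf + Mg) => a b ha hb.
have a0 : 0 <= Mf by apply: le_trans ha.
have b0 : 0 <= Mg by apply: le_trans hb.
rewrite /Order.min; case: ifP => _.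
  by apply: le_trans ha _; rewrite lerDl.
by apply: le_trans hb _; rewrite lerDr.
Qed.
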